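(* Let $G$ be a group, $S \subset G$ a finite set of semigroup generators of $G$, $\Sigma$ a finite alphabet, $L \subseteq \Sigma^*$ a language and $\psi : L \to G$ a bijection. Suppose that for every $s \in S$ there is a function $f_s : \Sigma^* \to \Sigma^*$ with $\psi(f_s(w)) = \psi(w)s$ for all $w \in L$, such that $f_s$ is computed by a one-tape Turing machine in time $o(n \log n)$, in the following sense: there is a one-tape Turing machine $\mathrm{TM}_s$ and a function $T_s(n)$ with $T_s(n)/(n\log n) \to 0$ such that on every input $x \in \Sigma^*$ of length $n$ (tape initially $\boxplus x \boxdot^\infty$, head on $\boxplus$), $\mathrm{TM}_s$ halts within $T_s(n)$ steps with tape content $\boxplus y \boxdot^\infty$, where $y$ is empty or does not end in $\boxdot$, and $f_s(x)$ is the string obtained from $y$ by deleting all symbols not in $\Sigma$. Then the normal form $\psi$ is quasigeodesic: there exists a constant $C > 0$ such that for every $g \in G$, $|w| \leqslant C(d_S(g) + 1)$, where $w \in L$ is the unique string with $\psi(w) = g$.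
   Context: A one-tape Turing machine has one semi-infinite tape whose leftmost cell contains the unmodifiable symbol $\boxplus$ (occurring only there); $\boxdot$ denotes the blank symbol; the tape alphabet contains $\Sigma \cup \{\boxplus, \boxdot\}$. For $g \in G$, $d_S(g)$ denotes the length of a shortest word $g_1 \dots g_n$ with $g_i \in S$ such that $g = g_1 \cdots g_n$ in $G$. $|w|$ denotes the length of the string $w$. *)

(* Defs.v *)
From Stdlib Require Export Reals List Arith.
Export ListNotations.
Open Scope R_scope.

Definition FiniteType (T : Type) : Prop := exists l : list T, forall x : T, In x l.

Inductive move := MLeft | MRight | MStay.

(** One-tape Turing machine over input alphabet Sigma, with a semi-infinite
    tape whose leftmost cell carries the unmodifiable end marker [lend]
    (the symbol ⊞), which occurs only there; [blank] is ⊡. *)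
Record TM (Sigma : Type) := {
  tstate : Type;
  tstate_fin : FiniteType tstate;
  tsym : Type;
  tsym_fin : FiniteType tsym;
  ofSigma : Sigma -> tsym;
  toSigma : tsym -> option Sigma;
  toSigma_spec : forall (a : tsym) (x : Sigma), toSigma a = Some x <-> a = ofSigma x;
  lend : tsym;
  blank : tsym;
  lend_blank : lend <> blank;
  lend_notSigma : toSigma lend = None;
  blank_notSigma : toSigma blank = None;
  tstart : tstate;
  thalting : tstate -> bool;
  delta : tstate -> tsym -> tstate * tsym * move;
  delta_lend : forall q, snd (fst (delta q lend)) = lend /\ snd (delta q lend) <> MLeft;
  delta_nolend : forall q a, a <> lend -> snd (fst (delta q a)) <> lend
}.

Arguments tstate {Sigma}.
Arguments tsym {Sigma}.
Arguments ofSigma {Sigma}.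
Arguments toSigma {Sigma}.
Arguments lend {Sigma}.
Arguments blank {Sigma}.
Arguments tstart {Sigma}.
Arguments thalting {Sigma}.
Arguments delta {Sigma}.

Record config {Sigma : Type} (M : TM Sigma) := mkConfig {
  cstate : tstate M;
  ctape : nat -> tsym M;
  chead : nat
}.
Arguments mkConfig {Sigma M}.
Arguments cstate {Sigma M}.
Arguments ctape {Sigma M}.
Arguments chead {Sigma M}.

Definition step {Sigma : Type} (M : TM Sigma) (c : config M) : config M :=
  if thalting M (cstate c) then c else
  match delta M (cstate c) (ctape c (chead c)) with
  | (q', a, m) =>
      mkConfig q'
        (fun i => if Nat.eqb i (chead c) then a else ctape c i)
        (match m with
         | MLeft => pred (chead c)
         | MRight => S (chead c)
         | MStay => chead c
         end)
  end.

Fixpoint run {Sigma : Type} (M : TM Sigma) (k : nat) (c : config M) : config M :=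
  match k with
  | O => c
  | S k' => run M k' (step M c)
  end.

Definition init_config {Sigma : Type} (M : TM Sigma) (x : list Sigma) : config M :=
  mkConfig (tstart M)
    (fun i => match i with
              | O => lend M
              | S j => match nth_error x j with
                       | Some a => ofSigma M a
                       | None => blank M
                       end
              end)
    O.

Definition tape_content {Sigma : Type} (M : TM Sigma) (t : nat -> tsym M)
    (y : list (tsym M)) : Prop :=
  t O = lend M /\
  (forall j a, nth_error y j = Some a -> t (S j) = a) /\
  (forall i, (length y < i)%nat -> t i = blank M) /\
  (y = [] \/ exists y' a, y = y' ++ [a] /\ a <> blank M).

Definition erase_nonSigma {Sigma : Type} (M : TM Sigma) (y : list (tsym M)) : list Sigma :=
  flat_map (fun a => match toSigma M a with Some x => [x] | None => [] end) y.

Definition computes_in_time {Sigma : Type} (M : TM Sigma) (T : nat -> nat)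
    (f : list Sigma -> list Sigma) : Prop :=
  forall x : list Sigma,
    let c := run M (T (length x)) (init_config M x) in
    thalting M (cstate c) = true /\
    exists y, tape_content M (ctape c) y /\ f x = erase_nonSigma M y.

Definition little_o_nlogn (T : nat -> nat) : Prop :=
  forall eps : R, 0 < eps -> exists N : nat, forall n : nat, (N <= n)%nat ->
    INR (T n) <= eps * (INR n * ln (INR n)).

Definition prodG {G : Type} (mul : G -> G -> G) (one : G) (ws : list G) : G :=
  fold_right mul one ws.

Definition semigroup_generates {G : Type} (mul : G -> G -> G) (one : G) (S : list G) : Prop :=
  forall g : G, exists ws : list G,
    ws <> [] /\ (forall x, In x ws -> In x S) /\ prodG mul one ws = g.

Definition word_length {G : Type} (mul : G -> G -> G) (one : G) (S : list G)
    (g : G) (n : nat) : Prop :=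
  (exists ws : list G, length ws = n /\ (forall x, In x ws -> In x S) /\ prodG mul one ws = g) /\
  (forall ws : list G, (forall x, In x ws -> In x S) -> prodG mul one ws = g -> (n <= length ws)%nat).

(* Main.v *)
Require Import Defs.
From Stdlib Require Import Lia Lra.
Local Open Scope nat_scope.

Section Basics.
Context {Sigma : Type} (M : TM Sigma).

Definition halted (c : config M) : Prop := thalting M (cstate c) = true.

Lemma run_S k c : run M (S k) c = step M (run M k c).
Proof.
  revert c; induction k; intro c; [reflexivity|].
  change (run M (S (S k)) c) with (run M (S k) (step M c)); rewrite IHk; reflexivity.
Qed.

Lemma step_halted c : halted c -> step M c = c.
Proof. unfold halted, step; intro H; rewrite H; reflexivity. Qed.

Lemma run_halted_const c t : halted (run M t c) -> forall t', t <= t' -> run M t' c = run M t c.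
Proof.
  intros H t' Ht; induction Ht; [reflexivity|].
  rewrite run_S, IHHt; apply step_halted; exact H.
Qed.

Definition mv (m : move) (h : nat) := match m with MLeft => pred h | MRight => S h | MStay => h end.

Lemma step_spec c q a m : ~ halted c -> delta M (cstate c) (ctape c (chead c)) = (q, a, m) ->
  cstate (step M c) = q /\
  (forall p, ctape (step M c) p = if Nat.eqb p (chead c) then a else ctape c p) /\
  chead (step M c) = mv m (chead c).
Proof.
  unfold halted, step; intros H1 H2.
  destruct (thalting M (cstate c)); [exfalso; apply H1; reflexivity|].
  rewrite H2; simpl; split; [reflexivity|]; split; [reflexivity|].
  destruct m; reflexivity.
Qed.

Lemma step_head c : chead (step M c) <= S (chead c) /\ chead c <= S (chead (step M c)).
Proof.
  unfold step; destruct (thalting M (cstate c)); [simpl; lia|].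
  destruct (delta M (cstate c) (ctape c (chead c))) as [[q a] m]; simpl; destruct m; simpl; lia.
Qed.

Lemma step_tape c p : p <> chead c -> ctape (step M c) p = ctape c p.
Proof.
  intro H; unfold step; destruct (thalting M (cstate c)); [reflexivity|].
  destruct (delta M (cstate c) (ctape c (chead c))) as [[q a] m]; simpl.
  destruct (Nat.eqb_spec p (chead c)); [contradiction|reflexivity].
Qed.

Section Run.
Variable c0 : config M.
Definition cf t := run M t c0.

Lemma cf_S t : cf (S t) = step M (cf t).
Proof. unfold cf; apply run_S. Qed.

Definition cross (b t : nat) : bool :=
  ((chead (cf t) =? b) && (chead (cf (S t)) =? S b)) ||
  ((chead (cf t) =? S b) && (chead (cf (S t)) =? b)).

Lemma cross_iff b t : cross b t = true <->
  (chead (cf t) = b /\ chead (cf (S t)) = S b) \/ (chead (cf t) = S b /\ chead (cf (S t)) = b).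
Proof. unfold cross. rewrite Bool.orb_true_iff, !Bool.andb_true_iff, !Nat.eqb_eq. tauto. Qed.

Lemma cross_false b t : cross b t = false <->
  ~ ((chead (cf t) = b /\ chead (cf (S t)) = S b) \/ (chead (cf t) = S b /\ chead (cf (S t)) = b)).
Proof. rewrite <- cross_iff. destruct (cross b t); split; congruence. Qed.

Fixpoint nc (b t : nat) : nat :=
  match t with 0 => 0 | S t => nc b t + (if cross b t then 1 else 0) end.

Fixpoint CSl (b t : nat) : list (tstate M) :=
  match t with 0 => [] | S t => CSl b t ++ (if cross b t then [cstate (cf (S t))] else []) end.

Lemma CSl_length b t : length (CSl b t) = nc b t.
Proof. induction t; simpl; [reflexivity|]. rewrite length_app, IHt; destruct (cross b t); reflexivity. Qed.

Lemma nc_mono b t t' : t <= t' -> nc b t <= nc b t'.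
Proof. intro H; induction H; simpl; lia. Qed.

Lemma nc_cross b u : cross b u = true -> nc b (S u) = S (nc b u).
Proof. intro H; simpl; rewrite H; lia. Qed.

Lemma nc_nocross b u : cross b u = false -> nc b (S u) = nc b u.
Proof. intro H; simpl; rewrite H; lia. Qed.

Lemma CSl_nth b u H : cross b u = true -> u < H -> nth_error (CSl b H) (nc b u) = Some (cstate (cf (S u))).
Proof.
  intros Hc; induction H; intro Hu; [lia|]. simpl.
  destruct (Nat.eq_dec u H) as [->|Hne].
  - rewrite Hc. rewrite nth_error_app2; rewrite CSl_length; [|lia]. rewrite Nat.sub_diag; reflexivity.
  - rewrite nth_error_app1. apply IHnat; lia.
    rewrite CSl_length. assert (nc b (S u) <= nc b H) by (apply nc_mono; lia).
    rewrite nc_cross in H0 by exact Hc. lia.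
Qed.

Lemma CSl_nth_inv b k H : k < length (CSl b H) -> exists u, u < H /\ cross b u = true /\ nc b u = k.
Proof.
  induction H; simpl; intro Hk; [lia|].
  rewrite length_app in Hk. destruct (cross b H) eqn:E; simpl in Hk.
  - destruct (Nat.eq_dec k (length (CSl b H))) as [e|ne].
    + exists H; rewrite CSl_length in e; repeat split; auto.
    + destruct IHnat as [u [? ?]]; [lia|]. exists u; split; [lia|tauto].
  - destruct IHnat as [u [? ?]]; [lia|]. exists u; split; [lia|tauto].
Qed.

Lemma halted_nc b t t' : halted (cf t) -> t <= t' -> nc b t' = nc b t.
Proof.
  intros Hh Ht; induction Ht; [reflexivity|].
  rewrite nc_nocross; [exact IHHt|]. apply cross_false.
  unfold cf in *. rewrite (run_halted_const c0 t Hh (S m)) by lia.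
  rewrite (run_halted_const c0 t Hh m) by lia. lia.
Qed.

Lemma stay_left j a s : a <= s -> chead (cf a) <= j ->
  (forall s', a <= s' < s -> cross j s' = false) -> chead (cf s) <= j.
Proof.
  intros Hs Ha Hn; induction Hs; [exact Ha|].
  assert (IH : chead (cf m) <= j) by (apply IHHs; intros; apply Hn; lia).
  assert (Hc := Hn m ltac:(lia)). rewrite cross_false in Hc.
  destruct (step_head (cf m)) as [h1 h2]. rewrite <- cf_S in h1, h2.
  destruct (Nat.eq_dec (chead (cf (S m))) (S j)); [|lia].
  exfalso; apply Hc; left; split; lia.
Qed.

Lemma stay_right i a s : a <= s -> i < chead (cf a) ->
  (forall s', a <= s' < s -> cross i s' = false) -> i < chead (cf s).
Proof.
  intros Hs Ha Hn; induction Hs; [exact Ha|].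
  assert (IH : i < chead (cf m)) by (apply IHHs; intros; apply Hn; lia).
  assert (Hc := Hn m ltac:(lia)). rewrite cross_false in Hc.
  destruct (step_head (cf m)) as [h1 h2]. rewrite <- cf_S in h1, h2.
  destruct (Nat.eq_dec (chead (cf (S m))) i); [|lia].
  exfalso; apply Hc; right; split; lia.
Qed.

Lemma tape_const p a s : a <= s -> (forall s', a <= s' < s -> chead (cf s') <> p) ->
  ctape (cf s) p = ctape (cf a) p.
Proof.
  intros Hs Hn; induction Hs; [reflexivity|].
  rewrite cf_S, step_tape by (apply not_eq_sym, Hn; lia).
  apply IHHs; intros; apply Hn; lia.
Qed.

Lemma head_le_time t : chead c0 = 0 -> chead (cf t) <= t.
Proof.
  intro H0; induction t; [unfold cf; simpl; lia|].
  rewrite cf_S; destruct (step_head (cf t)); lia.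
Qed.

Lemma head_ivt t m : chead c0 = 0 -> m <= chead (cf t) -> exists t', chead (cf t') = m.
Proof.
  intro H0; induction t; intro Hm.
  - exists 0; unfold cf in *; simpl in *; lia.
  - destruct (Nat.le_gt_cases m (chead (cf t))); [auto|].
    exists (S t). rewrite cf_S in *. destruct (step_head (cf t)); lia.
Qed.

Fixpoint sumcr (P t : nat) : nat :=
  match P with 0 => 0 | S P => sumcr P t + (if cross P t then 1 else 0) end.
Fixpoint sumnc (P t : nat) : nat :=
  match P with 0 => 0 | S P => sumnc P t + nc P t end.

Lemma sumcr_le P t : sumcr P t <= if Nat.min (chead (cf t)) (chead (cf (S t))) <? P then 1 else 0.
Proof.
  induction P; simpl; [lia|].
  destruct (cross P t) eqn:E.
  - apply cross_iff in E.
    assert (Nat.min (chead (cf t)) (chead (cf (S t))) = P) by lia.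
    rewrite H in IHP |- *. rewrite Nat.ltb_irrefl in IHP.
    destruct (Nat.ltb_spec P (S P)); lia.
  - destruct (Nat.ltb_spec (Nat.min (chead (cf t)) (chead (cf (S t)))) P);
    destruct (Nat.ltb_spec (Nat.min (chead (cf t)) (chead (cf (S t)))) (S P)); lia.
Qed.

Lemma sumnc_S P t : sumnc P (S t) = sumnc P t + sumcr P t.
Proof. induction P; simpl; [reflexivity|]. rewrite IHP. lia. Qed.

Lemma sumnc_le P t : sumnc P t <= t.
Proof.
  induction t; [induction P; simpl; lia|].
  rewrite sumnc_S. pose proof (sumcr_le P t).
  destruct (_ <? _); lia.
Qed.

End Run.
End Basics.
Section Cut.
Context {Sigma : Type} (M : TM Sigma).
Variables (c0 c0' : config M) (i d H0 : nat).
Hypothesis Hd : 0 < d.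
Hypothesis Hh0 : chead c0 = 0.
Hypothesis Hh0' : chead c0' = 0.
Hypothesis Hs0 : cstate c0' = cstate c0.
Hypothesis Ht0L : forall p, p <= i -> ctape c0' p = ctape c0 p.
Hypothesis Ht0R : forall p, i < p -> ctape c0' p = ctape c0 (p + d).
Hypothesis HH : halted M (cf M c0 H0).
Hypothesis HCS : CSl M c0 i H0 = CSl M c0 (i + d) H0.

Notation C := (cf M c0).
Notation C' := (cf M c0').

Definition Inv t' tL tR :=
  nc M c0 i tL = nc M c0 (i + d) tR /\
  (forall p, p <= i -> ctape (C' t') p = ctape (C tL) p) /\
  (forall p, i < p -> ctape (C' t') p = ctape (C tR) (p + d)) /\
  ((chead (C' t') <= i /\ chead (C tL) = chead (C' t') /\ cstate (C' t') = cstate (C tL) /\ chead (C tR) <= i + d) \/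
   (i < chead (C' t') /\ chead (C tR) = chead (C' t') + d /\ cstate (C' t') = cstate (C tR) /\ i < chead (C tL))) /\
  (forall s, s <= tR -> i + d < chead (C s) -> exists t'', t'' <= t' /\ chead (C' t'') + d = chead (C s)).

Lemma not_halted_lt t : ~ halted M (C t) -> t < H0.
Proof.
  intro H. destruct (Nat.lt_ge_cases t H0) as [|Hge]; [assumption|].
  exfalso; apply H. unfold cf in *. rewrite (run_halted_const M c0 H0 HH t Hge). exact HH.
Qed.

Lemma match_cross b b' t u0 : cross M c0 b t = true -> ~ halted M (C t) ->
  CSl M c0 b H0 = CSl M c0 b' H0 -> nc M c0 b t = nc M c0 b' u0 ->
  exists u, u0 <= u /\ cross M c0 b' u = true /\ nc M c0 b' u = nc M c0 b t /\
            cstate (C (S u)) = cstate (C (S t)).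
Proof.
  intros Hc Hnh Heq Hn.
  assert (Ht := not_halted_lt t Hnh).
  assert (E1 := CSl_nth M c0 b t H0 Hc Ht).
  assert (Hlen : nc M c0 b t < length (CSl M c0 b' H0)).
  { rewrite <- Heq. apply nth_error_Some. rewrite E1. discriminate. }
  destruct (CSl_nth_inv M c0 b' _ H0 Hlen) as [u [Hu [Hcu Hnu]]].
  assert (E2 := CSl_nth M c0 b' u H0 Hcu Hu).
  exists u. split; [|split; [exact Hcu|split; [exact Hnu|]]].
  - destruct (Nat.le_gt_cases u0 u) as [|Hlt]; [assumption|].
    assert (A1 : nc M c0 b' (S u) <= nc M c0 b' u0) by (apply nc_mono; lia).
    rewrite nc_cross in A1 by exact Hcu. lia.
  - rewrite Hnu, <- Heq, E1 in E2. congruence.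
Qed.

Lemma nocross_between b tR u : nc M c0 b tR = nc M c0 b u -> forall s', tR <= s' < u -> cross M c0 b s' = false.
Proof.
  intros Hn s' Hs. destruct (cross M c0 b s') eqn:E; [|reflexivity].
  assert (A1 : nc M c0 b tR <= nc M c0 b s') by (apply nc_mono; lia).
  assert (A2 : nc M c0 b (S s') <= nc M c0 b u) by (apply nc_mono; lia).
  rewrite nc_cross in A2 by exact E. lia.
Qed.

Lemma Inv_init : Inv 0 0 0.
Proof.
  unfold Inv, cf; simpl. split; [reflexivity|]. split; [exact Ht0L|]. split; [exact Ht0R|].
  split; [left; rewrite Hh0, Hh0', Hs0; repeat split; lia|].
  intros s Hs Hj. assert (s = 0) by lia. subst. simpl in Hj. lia.
Qed.

Lemma Inv_step t' tL tR : Inv t' tL tR -> exists tL' tR', Inv (S t') tL' tR'.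
Proof.
  intros [Hn [HtL [HtR [Side Hist]]]].
  destruct (thalting M (cstate (C' t'))) eqn:Hhalt.
  { exists tL, tR. assert (E : C' (S t') = C' t') by (rewrite cf_S; apply step_halted; exact Hhalt).
    unfold Inv; rewrite E. split; [exact Hn|]. split; [exact HtL|]. split; [exact HtR|]. split; [exact Side|].
    intros s Hs Hj. destruct (Hist s Hs Hj) as [t'' [? ?]]. exists t''; split; [lia|assumption]. }
  assert (Hnh' : ~ halted M (C' t')) by (unfold halted; congruence).
  destruct (delta M (cstate (C' t')) (ctape (C' t') (chead (C' t')))) as [[q a] m] eqn:Ed.
  destruct (step_spec M (C' t') q a m Hnh' Ed) as [Sq' [St' Sh']].
  rewrite <- cf_S in Sq', St', Sh'.
  destruct Side as [[Hl [HhL [HsL HhR]]] | [Hl [HhR [HsR HhL]]]].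
  -
    assert (Hnh : ~ halted M (C tL)) by (unfold halted in *; rewrite <- HsL; exact Hnh').
    assert (Ed2 : delta M (cstate (C tL)) (ctape (C tL) (chead (C tL))) = (q, a, m)).
    { rewrite <- HsL, HhL, <- HtL by exact Hl. exact Ed. }
    destruct (step_spec M (C tL) q a m Hnh Ed2) as [Sq [St Sh]].
    rewrite <- cf_S in Sq, St, Sh.
    destruct (Nat.le_gt_cases (mv m (chead (C' t'))) i) as [Hm|Hm].
    + exists (S tL), tR. unfold Inv.
      assert (Hcr : cross M c0 i tL = false).
      { apply cross_false. rewrite Sh, HhL. lia. }
      split; [rewrite nc_nocross by exact Hcr; exact Hn|].
      split; [intros p Hp; rewrite St', St, HtL by exact Hp; rewrite HhL; reflexivity|].
      split; [intros p Hp; rewrite St'; destruct (Nat.eqb_spec p (chead (C' t'))); [lia|]; apply HtR; exact Hp|].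
      split; [left; rewrite Sh', Sh, Sq', Sq, HhL; repeat split; lia|].
      intros s Hs Hj. destruct (Hist s Hs Hj) as [t'' [? ?]]. exists t''; split; [lia|assumption].
    + assert (Hh : chead (C' t') = i /\ mv m (chead (C' t')) = S i).
      { destruct m; simpl in *; lia. }
      assert (Hcr : cross M c0 i tL = true).
      { apply cross_iff. left. rewrite Sh, HhL. lia. }
      destruct (match_cross i (i + d) tL tR Hcr Hnh HCS Hn) as [u [Hu [Hcu [Hnu Hsu]]]].
      assert (Hnb := nocross_between (i + d) tR u ltac:(rewrite Hnu; symmetry; exact Hn)).
      assert (Hleft : forall s, tR <= s <= u -> chead (C s) <= i + d).
      { intros s Hs. apply (stay_left M c0 (i + d) tR s); try lia; auto.
        intros s' Hs'. apply Hnb. lia. }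
      assert (Hhu : chead (C u) = i + d /\ chead (C (S u)) = S (i + d)).
      { apply cross_iff in Hcu. specialize (Hleft u ltac:(lia)). lia. }
      exists (S tL), (S u). unfold Inv.
      split; [rewrite nc_cross by exact Hcr; rewrite nc_cross by exact Hcu; rewrite Hnu; reflexivity|].
      split; [intros p Hp; rewrite St', St, HtL by exact Hp; rewrite HhL; reflexivity|].
      split.
      { intros p Hp. rewrite St'. destruct (Nat.eqb_spec p (chead (C' t'))); [lia|].
        rewrite HtR by exact Hp. symmetry. apply tape_const; [lia|].
        intros s' Hs'. specialize (Hleft s' ltac:(lia)). lia. }
      split; [right; rewrite Sh', Sq', Hsu, Sq, Sh, HhL; repeat split; lia|].
      intros s Hs Hj.
      destruct (Nat.le_gt_cases s tR) as [Hs1|Hs1].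
      { destruct (Hist s Hs1 Hj) as [t'' [? ?]]. exists t''; split; [lia|assumption]. }
      destruct (Nat.eq_dec s (S u)) as [->|Hs2].
      { exists (S t'). split; [lia|]. rewrite Sh'. lia. }
      specialize (Hleft s ltac:(lia)). lia.
  -
    assert (Hnh : ~ halted M (C tR)) by (unfold halted in *; rewrite <- HsR; exact Hnh').
    assert (Ed2 : delta M (cstate (C tR)) (ctape (C tR) (chead (C tR))) = (q, a, m)).
    { rewrite <- HsR, HhR, <- HtR by exact Hl. exact Ed. }
    destruct (step_spec M (C tR) q a m Hnh Ed2) as [Sq [St Sh]].
    rewrite <- cf_S in Sq, St, Sh.
    assert (Hmv : mv m (chead (C tR)) = mv m (chead (C' t')) + d).
    { rewrite HhR. destruct m; simpl; lia. }
    destruct (Nat.le_gt_cases (mv m (chead (C' t'))) i) as [Hm|Hm].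
    + assert (Hh : chead (C' t') = S i /\ mv m (chead (C' t')) = i).
      { destruct m; simpl in *; lia. }
      assert (Hcr : cross M c0 (i + d) tR = true).
      { apply cross_iff. right. rewrite Sh, Hmv, HhR. lia. }
      destruct (match_cross (i + d) i tR tL Hcr Hnh (eq_sym HCS) (eq_sym Hn)) as [u [Hu [Hcu [Hnu Hsu]]]].
      assert (Hnb := nocross_between i tL u ltac:(rewrite Hnu; exact Hn)).
      assert (Hright : forall s, tL <= s <= u -> i < chead (C s)).
      { intros s Hs. apply (stay_right M c0 i tL s); try lia; auto.
        intros s' Hs'. apply Hnb. lia. }
      assert (Hhu : chead (C u) = S i /\ chead (C (S u)) = i).
      { apply cross_iff in Hcu. specialize (Hright u ltac:(lia)). lia. }
      exists (S u), (S tR). unfold Inv.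
      split; [rewrite nc_cross by exact Hcu; rewrite nc_cross by exact Hcr; rewrite Hnu; reflexivity|].
      split.
      { intros p Hp. rewrite St'. destruct (Nat.eqb_spec p (chead (C' t'))); [lia|].
        rewrite HtL by exact Hp. symmetry. apply tape_const; [lia|].
        intros s' Hs'. specialize (Hright s' ltac:(lia)). lia. }
      split.
      { intros p Hp. rewrite St', St, HtR by exact Hp. rewrite HhR.
        destruct (Nat.eqb_spec p (chead (C' t'))); destruct (Nat.eqb_spec (p + d) (chead (C' t') + d)); try lia; reflexivity. }
      split; [left; rewrite Sh', Sq', Hsu, Sq, Sh, Hmv; repeat split; lia|].
      intros s Hs Hj.
      destruct (Nat.le_gt_cases s tR) as [Hs1|Hs1].
      { destruct (Hist s Hs1 Hj) as [t'' [? ?]]. exists t''; split; [lia|assumption]. }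
      assert (s = S tR) by lia. subst s. rewrite Sh, Hmv in Hj. lia.
    + exists tL, (S tR). unfold Inv.
      assert (Hcr : cross M c0 (i + d) tR = false).
      { apply cross_false. rewrite Sh, Hmv, HhR. lia. }
      split; [rewrite nc_nocross by exact Hcr; exact Hn|].
      split; [intros p Hp; rewrite St'; destruct (Nat.eqb_spec p (chead (C' t'))); [lia|]; apply HtL; exact Hp|].
      split.
      { intros p Hp. rewrite St', St, HtR by exact Hp. rewrite HhR.
        destruct (Nat.eqb_spec p (chead (C' t'))); destruct (Nat.eqb_spec (p + d) (chead (C' t') + d)); try lia; reflexivity. }
      split; [right; rewrite Sh', Sq', Sq, Sh, Hmv; repeat split; lia|].
      intros s Hs Hj.
      destruct (Nat.le_gt_cases s tR) as [Hs1|Hs1].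
      { destruct (Hist s Hs1 Hj) as [t'' [? ?]]. exists t''; split; [lia|assumption]. }
      assert (s = S tR) by lia. subst s. exists (S t'). split; [lia|]. rewrite Sh, Hmv in *. rewrite Sh'. lia.
Qed.

Lemma Inv_all t' : exists tL tR, Inv t' tL tR.
Proof.
  induction t' as [|t' [tL [tR IH]]]; [exists 0, 0; exact Inv_init|].
  exact (Inv_step t' tL tR IH).
Qed.

Lemma cut_reach th s : halted M (C' th) -> i + d < chead (C s) ->
  exists t'', chead (C' t'') + d = chead (C s).
Proof.
  intros Hth Hs.
  destruct (Inv_all th) as [tL [tR [Hn [HtL [HtR [Side Hist]]]]]].
  destruct (Nat.le_gt_cases s tR) as [Hle|Hgt].
  { destruct (Hist s Hle Hs) as [t'' [_ ?]]; eauto. }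
  destruct Side as [[Hl [HhL [HsL HhR]]] | [Hl [HhR [HsR HhL]]]].
  - assert (HhtL : halted M (C tL)) by (unfold halted in *; rewrite <- HsL; exact Hth).
    assert (E1 : nc M c0 i tL = nc M c0 i H0).
    { rewrite <- (halted_nc M c0 i tL (Nat.max tL H0) HhtL) by lia.
      apply halted_nc; [exact HH|lia]. }
    assert (E2 : nc M c0 (i + d) (Nat.max s H0) = nc M c0 (i + d) H0) by (apply halted_nc; [exact HH|lia]).
    assert (E3 : nc M c0 i H0 = nc M c0 (i + d) H0) by (rewrite <- !CSl_length, HCS; reflexivity).
    assert (Hnb := nocross_between (i + d) tR (Nat.max s H0) ltac:(congruence)).
    assert (chead (C s) <= i + d).
    { apply (stay_left M c0 (i + d) tR s); try lia; auto. intros s' Hs'. apply Hnb. lia. }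
    lia.
  - assert (HhtR : halted M (C tR)) by (unfold halted in *; rewrite <- HsR; exact Hth).
    assert (E : C s = C tR) by (unfold cf in *; apply run_halted_const; [exact HhtR|lia]).
    rewrite E in *. destruct (Hist tR (le_n _) Hs) as [t'' [_ ?]]; eauto.
Qed.

End Cut.
Section Count.
Context {A : Type} (e : list A) (He : forall a, In a e).

Fixpoint words (l : nat) : list (list A) :=
  match l with 0 => [[]] | S l => flat_map (fun w => map (fun a => a :: w) e) (words l) end.

Lemma words_in w : In w (words (length w)).
Proof.
  induction w; simpl; [left; reflexivity|].
  apply in_flat_map. exists w. split; [exact IHw|]. apply (in_map (fun a0 => a0 :: w)). apply He.
Qed.

Lemma fm_len (l' : list (list A)) : length (flat_map (fun w => map (fun a => a :: w) e) l') = length e * length l'.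
Proof. induction l'; simpl; [lia|]. rewrite length_app, length_map, IHl'. lia. Qed.

Lemma words_len l : length (words l) <= length e ^ l.
Proof.
  induction l; simpl; [lia|]. rewrite fm_len. apply Nat.mul_le_mono_l. exact IHl.
Qed.

Fixpoint shorts (L : nat) : list (list A) :=
  match L with 0 => [] | S L => shorts L ++ words L end.

Lemma shorts_in w L : length w < L -> In w (shorts L).
Proof.
  induction L; intro H; [lia|]. simpl. apply in_or_app.
  destruct (Nat.eq_dec (length w) L) as [<-|]; [right; apply words_in|left; apply IHL; lia].
Qed.

Lemma shorts_len L : length (shorts L) + length e ^ L <= S (length e) ^ L.
Proof.
  induction L; simpl; [lia|]. rewrite length_app.
  pose proof (words_len L).
  pose proof (Nat.pow_le_mono_l (length e) (S (length e)) L ltac:(lia)).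
  nia.
Qed.

Lemma NoDup_map_on {B D : Type} (F : B -> D) (l : list B) : NoDup l ->
  (forall a b, In a l -> In b l -> F a = F b -> a = b) -> NoDup (map F l).
Proof.
  induction l as [|x l IH]; intros Hn Hi; simpl; [constructor|].
  inversion Hn; subst. constructor.
  - intro Hin. apply in_map_iff in Hin as [y [Hy Hiny]].
    assert (y = x) by (apply Hi; simpl; auto). subst; contradiction.
  - apply IH; auto. intros; apply Hi; simpl; auto.
Qed.

Fixpoint sumF (F : nat -> list A) (p : nat) : nat :=
  match p with 0 => 0 | S p => sumF F p + length (F p) end.

Lemma sumF_count (F : nat -> list A) L p :
  L * p <= sumF F p + L * length (filter (fun b => length (F b) <? L) (seq 0 p)).
Proof.
  induction p; [simpl; lia|].
  rewrite seq_S, filter_app, length_app. cbn [sumF filter].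
  replace (0 + p) with p by lia.
  destruct (Nat.ltb_spec (length (F p)) L); simpl length; nia.
Qed.

Lemma distinct_sum (F : nat -> list A) p L :
  (forall a b, a < p -> b < p -> F a = F b -> a = b) ->
  L * (p - S (length e) ^ L) <= sumF F p.
Proof.
  intro Hinj.
  set (sh := filter (fun b => length (F b) <? L) (seq 0 p)).
  assert (Hnd : NoDup (map F sh)).
  { apply (NoDup_map_on F sh). apply NoDup_filter, seq_NoDup.
    intros a b Ha Hb. unfold sh in *. apply filter_In in Ha, Hb.
    destruct Ha as [Ha _], Hb as [Hb _]. apply in_seq in Ha, Hb. apply Hinj; lia. }
  assert (Hinc : incl (map F sh) (shorts L)).
  { intros w Hw. apply in_map_iff in Hw as [b [<- Hb]]. unfold sh in Hb.
    apply filter_In in Hb as [_ Hb]. apply Nat.ltb_lt in Hb. apply shorts_in; exact Hb. }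
  pose proof (NoDup_incl_length Hnd Hinc) as Hl. rewrite length_map in Hl.
  pose proof (shorts_len L).
  pose proof (sumF_count F L p). fold sh in H0.
  assert (length sh <= S (length e) ^ L) by lia.
  assert (L * (p - S (length e) ^ L) <= L * (p - length sh)) by (apply Nat.mul_le_mono_l; lia).
  rewrite Nat.mul_sub_distr_l in H2. lia.
Qed.

End Count.
Fixpoint sumT (T : nat -> nat) (n : nat) : nat :=
  match n with 0 => 0 | S n => sumT T n + T n end.

Lemma sumT_ge T n m : n < m -> T n <= sumT T m.
Proof. induction m; intro H; [lia|]. simpl. destruct (Nat.eq_dec n m); [subst; lia|]. specialize (IHm ltac:(lia)); lia. Qed.

Lemma ln2_lt_1 : (ln 2 < 1)%R.
Proof.
  assert (H : (1 + 1 < exp 1)%R) by (apply exp_ineq1; apply R1_neq_R0).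
  rewrite <- (ln_exp 1). apply ln_increasing; lra.
Qed.

Lemma ln_bound n : 0 < n -> (ln (INR n) <= INR (S (Nat.log2 n)))%R.
Proof.
  intro Hn. destruct (Nat.log2_spec n Hn) as [_ Hlt].
  apply lt_INR in Hlt. rewrite pow_INR in Hlt. replace (INR 2) with 2%R in Hlt by (simpl; lra).
  assert (H0 : (0 < INR n)%R) by (apply lt_0_INR; lia).
  apply Rlt_le. eapply Rlt_le_trans. apply ln_increasing; [exact H0|exact Hlt].
  rewrite ln_pow by lra. pose proof ln2_lt_1. pose proof (pos_INR (S (Nat.log2 n))).
  pose proof ln_lt_2. nra.
Qed.

Section Kob.
Context {Sigma : Type} (M : TM Sigma) (T : nat -> nat) (f : list Sigma -> list Sigma).
Hypothesis HT : little_o_nlogn T.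
Hypothesis Hc : computes_in_time M T f.

Lemma halts x : halted M (cf M (init_config M x) (T (length x))).
Proof. unfold halted, cf. exact (proj1 (Hc x)). Qed.

Lemma head_bound_halt x s : chead (cf M (init_config M x) s) <= T (length x).
Proof.
  destruct (Nat.le_gt_cases s (T (length x))).
  - pose proof (head_le_time M (init_config M x) s eq_refl). lia.
  - unfold cf. rewrite (run_halted_const M (init_config M x) (T (length x)) (halts x) s) by lia.
    apply (head_le_time M (init_config M x)). reflexivity.
Qed.

Lemma cut_input x i d : i + d <= length x ->
  length (firstn i x ++ skipn (i + d) x) = length x - d /\
  (forall p, p <= i -> ctape (init_config M (firstn i x ++ skipn (i + d) x)) p = ctape (init_config M x) p) /\
  (forall p, i < p -> ctape (init_config M (firstn i x ++ skipn (i + d) x)) p = ctape (init_config M x) (p + d)).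
Proof.
  intro H. assert (Hf : length (firstn i x) = i) by (rewrite length_firstn; lia).
  split; [rewrite length_app, length_skipn, Hf; lia|]. split.
  - intros p Hp. destruct p; simpl; [reflexivity|].
    rewrite nth_error_app1 by lia. rewrite nth_error_firstn.
    destruct (Nat.ltb_spec p i); [reflexivity|lia].
  - intros p Hp. destruct p; [lia|]. simpl.
    rewrite nth_error_app2 by lia. rewrite nth_error_skipn, Hf.
    replace (i + d + (p - i)) with (p + d) by lia. reflexivity.
Qed.

Lemma sumF_sumnc c0 H0 P : sumF (fun b => CSl M c0 b H0) P = sumnc M c0 P H0.
Proof. induction P; simpl; [reflexivity|]. rewrite IHP, CSl_length. reflexivity. Qed.

Lemma kob : exists B, forall x t, chead (cf M (init_config M x) t) <= length x + B.
Proof.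
  destruct (tstate_fin _ M) as [e He].
  set (r := S (length e)).
  assert (Heps : (0 < / INR (8 * r))%R) by (apply Rinv_0_lt_compat, lt_0_INR; lia).
  destruct (HT _ Heps) as [N HN].
  set (N' := N + 2 ^ (4 * r) + 4).
  set (B := sumT T N').
  exists B.
  intro x. remember (length x) as n eqn:Hn. revert x Hn.
  induction n as [n IH] using (well_founded_induction Wf_nat.lt_wf).
  intros x Hn t.
  destruct (Nat.le_gt_cases (chead (cf M (init_config M x) t)) (n + B)) as [ok|bad]; [exact ok|].
  exfalso.
  destruct (head_ivt M (init_config M x) t (n + B + 1) eq_refl ltac:(lia)) as [s Hs].
  destruct (Nat.lt_ge_cases n N') as [Hsmall|Hbig].
  { pose proof (head_bound_halt x s). rewrite <- Hn in H. pose proof (sumT_ge T n N' Hsmall).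
    unfold B in Hs. lia. }
  set (c0 := init_config M x). set (H0 := T n).
  assert (Hno : forall a b, a < b <= n -> CSl M c0 a H0 = CSl M c0 b H0 -> False).
  { intros a b Hab Heq.
    set (d := b - a).
    destruct (cut_input x a d ltac:(unfold d; lia)) as [Hlen [HtL HtR]].
    set (x' := firstn a x ++ skipn (a + d) x) in *.
    assert (Hb : a + d = b) by (unfold d; lia).
    assert (HH : halted M (cf M c0 H0)) by (unfold c0, H0; rewrite Hn; apply halts).
    assert (HCS : CSl M c0 a H0 = CSl M c0 (a + d) H0) by (rewrite Hb; exact Heq).
    destruct (cut_reach M c0 (init_config M x') a d H0 ltac:(unfold d; lia) eq_refl eq_refl eq_refl
               HtL HtR HH HCS (T (length x')) s (halts x') ltac:(unfold c0; rewrite Hs; lia)) as [t'' Ht''].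
    assert (Hlt : length x' < n) by (rewrite Hlen; unfold d; lia).
    pose proof (IH (length x') Hlt x' eq_refl t'').
    unfold c0 in Ht''. rewrite Hs in Ht''. rewrite Hlen in H. lia. }
  assert (Hinj : forall a b, a < S n -> b < S n -> CSl M c0 a H0 = CSl M c0 b H0 -> a = b).
  { intros a b Ha Hb Heq. destruct (lt_eq_lt_dec a b) as [[Hlt|Heq']|Hlt]; auto.
    - exfalso; apply (Hno a b); [lia|exact Heq].
    - exfalso; apply (Hno b a); [lia|symmetry; exact Heq]. }
  assert (Hsum : forall L, L * (S n - r ^ L) <= T n).
  { intro L. pose proof (distinct_sum e He (fun b => CSl M c0 b H0) (S n) L Hinj) as Hd.
    rewrite sumF_sumnc in Hd. pose proof (sumnc_le M c0 (S n) H0). fold r in Hd. unfold H0 in *. lia. }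
  assert (HnN : N <= n) by (unfold N' in Hbig; lia).
  assert (Hnpos : 0 < n) by (unfold N' in Hbig; lia).
  set (l2 := Nat.log2 n).
  assert (HTn : T n * (8 * r) <= n * S l2).
  { specialize (HN n HnN).
    assert (A1 : (INR (T n) * INR (8 * r) <= INR n * ln (INR n))%R).
    { replace (INR n * ln (INR n))%R with ((/ INR (8 * r) * (INR n * ln (INR n))) * INR (8 * r))%R
        by (field; apply not_0_INR; lia).
      apply Rmult_le_compat_r; [apply pos_INR|exact HN]. }
    assert (A2 : (INR n * ln (INR n) <= INR n * INR (S l2))%R).
    { apply Rmult_le_compat_l; [apply pos_INR|apply ln_bound; exact Hnpos]. }
    apply INR_le. rewrite !mult_INR. rewrite mult_INR in A1. lra. }
  set (L := l2 / (2 * r)).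
  assert (F1 : 2 ^ l2 <= n) by (apply Nat.log2_spec; exact Hnpos).
  assert (F2 : 4 * r <= l2).
  { apply Nat.log2_le_pow2; [exact Hnpos|]. unfold N' in Hbig. lia. }
  assert (F3 : l2 < 2 * r * (L + 1)).
  { pose proof (Nat.div_mod l2 (2 * r) ltac:(lia)). pose proof (Nat.mod_upper_bound l2 (2 * r) ltac:(lia)).
    unfold L. nia. }
  assert (F4 : 2 <= L) by nia.
  assert (F5 : r ^ L <= 2 ^ (r * L)).
  { rewrite Nat.pow_mul_r. apply Nat.pow_le_mono_l. apply Nat.lt_le_incl, Nat.pow_gt_lin_r. lia. }
  assert (F6 : 2 ^ (r * L) * 2 ^ (r * L) <= n).
  { rewrite <- Nat.pow_add_r. eapply Nat.le_trans; [|exact F1]. apply Nat.pow_le_mono_r; [lia|].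
    pose proof (Nat.Div0.mul_div_le l2 (2 * r)). unfold L. nia. }
  set (a := r ^ L) in *.
  assert (F7 : 2 * a <= n).
  { destruct (Nat.le_gt_cases a 1); [unfold N' in Hbig; lia|].
    assert (a * a <= n) by (eapply Nat.le_trans; [apply Nat.mul_le_mono; exact F5|exact F6]). nia. }
  specialize (Hsum L). fold a in Hsum.
  set (X := S n - a) in *.
  assert (G1 : n <= 2 * X) by (unfold X; lia).
  assert (G2 : L * X * (8 * r) <= n * (2 * r * (L + 1))).
  { eapply Nat.le_trans; [apply Nat.mul_le_mono_r; exact Hsum|].
    eapply Nat.le_trans; [exact HTn|]. apply Nat.mul_le_mono_l. lia. }
  assert (G3 : L * n * (4 * r) <= L * X * (8 * r)) by nia.
  assert (G4 : (2 * r * n) * (2 * L) <= (2 * r * n) * (L + 1)) by nia.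
  apply Nat.mul_le_mono_pos_l in G4; [lia|]. nia.
Qed.

Lemma erase_len y : length (erase_nonSigma M y) <= length y.
Proof.
  induction y; simpl; [lia|]. unfold erase_nonSigma in *. simpl.
  destruct (toSigma M a); simpl; lia.
Qed.

Lemma out_bound : exists B, forall x, length (f x) <= length x + B.
Proof.
  destruct kob as [B HB]. exists B. intro x.
  destruct (Hc x) as [Hh [y [[Ht0 [Hy [Hbl Hend]]] Hf]]].
  rewrite Hf. eapply Nat.le_trans; [apply erase_len|].
  destruct Hend as [->|[y' [a0 [-> Ha]]]]; [simpl; lia|].
  rewrite length_app; simpl.
  destruct (Nat.le_gt_cases (length y' + 1) (length x + B)) as [|Hgt]; [lia|]. exfalso.
  assert (E : nth_error (y' ++ [a0]) (length y') = Some a0).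
  { rewrite nth_error_app2 by lia. rewrite Nat.sub_diag. reflexivity. }
  specialize (Hy _ _ E).
  assert (Ec : ctape (cf M (init_config M x) (T (length x))) (S (length y')) =
               ctape (cf M (init_config M x) 0) (S (length y'))).
  { apply tape_const; [lia|]. intros s' _. specialize (HB x s'). lia. }
  unfold cf in Ec. simpl run in Ec. rewrite Hy in Ec. simpl in Ec.
  rewrite (proj2 (nth_error_None x (length y'))) in Ec by lia.
  apply Ha; exact Ec.
Qed.

End Kob.
Section Group.
Context (G : Type) (mul : G -> G -> G) (one : G) (inv : G -> G)
  (mul_assoc : forall x y z, mul x (mul y z) = mul (mul x y) z)
  (mul_one_l : forall x, mul one x = x)
  (mul_inv_l : forall x, mul (inv x) x = one).

Lemma mul_one_r x : mul x one = x.
Proof.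
  set (z := mul x (inv x)).
  assert (Hzz : mul z z = z).
  { unfold z. rewrite <- mul_assoc. rewrite (mul_assoc (inv x) x (inv x)), mul_inv_l, mul_one_l. reflexivity. }
  assert (Hz : z = one).
  { rewrite <- (mul_one_l z) at 1. rewrite <- (mul_inv_l z) at 1. rewrite <- mul_assoc, Hzz. apply mul_inv_l. }
  rewrite <- (mul_inv_l x), mul_assoc. fold z. rewrite Hz. apply mul_one_l.
Qed.
End Group.

Lemma uniform_bound {G Sigma : Type} (mul : G -> G -> G) (L : list Sigma -> Prop) (psi : list Sigma -> G)
  (S' : list G) :
  (forall s, In s S' ->
     exists f : list Sigma -> list Sigma,
       (forall w, L w -> L (f w) /\ psi (f w) = mul (psi w) s) /\
       exists (M : TM Sigma) (T : nat -> nat), little_o_nlogn T /\ computes_in_time M T f) ->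
  exists Bm, forall s, In s S' -> exists f : list Sigma -> list Sigma,
       (forall w, L w -> L (f w) /\ psi (f w) = mul (psi w) s) /\
       (forall w, length (f w) <= length w + Bm).
Proof.
  induction S' as [|s0 S' IH]; intro Hf.
  - exists 0. intros s [].
  - destruct IH as [Bm HBm]. { intros s Hs. apply Hf. right; exact Hs. }
    destruct (Hf s0 (or_introl eq_refl)) as [f0 [Hf0 [M [T [HT Hc]]]]].
    destruct (out_bound M T f0 HT Hc) as [B0 HB0].
    exists (Nat.max Bm B0). intros s [<-|Hs].
    + exists f0. split; [exact Hf0|]. intro w. specialize (HB0 w). lia.
    + destruct (HBm s Hs) as [f [Hf1 Hf2]]. exists f. split; [exact Hf1|]. intro w. specialize (Hf2 w). lia.
Qed.

Local Open Scope R_scope.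

Theorem theorem1p4
  (G : Type) (mul : G -> G -> G) (one : G) (inv : G -> G)
  (mul_assoc : forall x y z, mul x (mul y z) = mul (mul x y) z)
  (mul_one_l : forall x, mul one x = x)
  (mul_inv_l : forall x, mul (inv x) x = one)
  (S : list G) (HS : semigroup_generates mul one S)
  (Sigma : Type) (HSigma : FiniteType Sigma)
  (L : list Sigma -> Prop) (psi : list Sigma -> G)
  (psi_inj : forall w1 w2, L w1 -> L w2 -> psi w1 = psi w2 -> w1 = w2)
  (psi_surj : forall g, exists w, L w /\ psi w = g)
  (Hf : forall s, In s S ->
     exists f : list Sigma -> list Sigma,
       (forall w, L w -> L (f w) /\ psi (f w) = mul (psi w) s) /\
       exists (M : TM Sigma) (T : nat -> nat),
         little_o_nlogn T /\ computes_in_time M T f) :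
  exists C : R, 0 < C /\
    forall (g : G) (w : list Sigma) (n : nat),
      L w -> psi w = g -> word_length mul one S g n ->
      INR (length w) <= C * (INR n + 1).
Proof.
  destruct (uniform_bound mul L psi S Hf) as [Bm HBm].
  assert (Hword : forall ws, (forall x, In x ws -> In x S) -> forall w, L w ->
    exists w', L w' /\ psi w' = mul (psi w) (prodG mul one ws) /\
               (length w' <= length w + Bm * length ws)%nat).
  { induction ws as [|s ws IH]; intros Hin w Hw.
    - exists w. simpl. split; [exact Hw|]. split; [symmetry; apply (mul_one_r G mul one inv mul_assoc mul_one_l mul_inv_l)|lia].
    - destruct (HBm s (Hin s (or_introl eq_refl))) as [f [Hf1 Hf2]].
      destruct (Hf1 w Hw) as [Hfw Hpfw].
      destruct (IH (fun x Hx => Hin x (or_intror Hx)) (f w) Hfw) as [w' [Hw' [Hp' Hl']]].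
      exists w'. split; [exact Hw'|]. split.
      + rewrite Hp', Hpfw. simpl. symmetry. apply mul_assoc.
      + specialize (Hf2 w). simpl length. nia. }
  destruct (psi_surj one) as [w0 [HL0 Hp0]].
  exists (INR (length w0 + Bm) + 1). split.
  { pose proof (pos_INR (length w0 + Bm)). lra. }
  intros g w n HLw Hpw [[ws [Hlen [Hin Hprod]]] _].
  destruct (Hword ws Hin w0 HL0) as [w' [Hw' [Hp' Hl']]].
  rewrite Hp0, mul_one_l, Hprod in Hp'.
  assert (w = w') by (apply psi_inj; auto; congruence). subst w'.
  rewrite Hlen in Hl'. apply le_INR in Hl'. rewrite plus_INR, mult_INR in Hl'.
  rewrite plus_INR.
  pose proof (pos_INR (length w0)). pose proof (pos_INR Bm). pose proof (pos_INR n).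
  nra.
Qed.
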